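(* Let $\mathcal{C}$ be the full subcategory of $q\mathrm{Set}=\mathrm{PSh}(\mathrm{Coalg})$ consisting of the presheaves of the form $\mathcal{Y}(D)=\mathrm{Coalg}(-,D)$, $D$ a coalgebra. For coalgebras $D_1,D_2$ and $X_i:=\mathcal{Y}(D_i)$, define for every coalgebra $C$ $$(X_1\times_{\mathcal{C}}X_2)(C):=\{(x_1,x_2)\in X_1(C)\times X_2(C)\ :\ x_1(c_{(1)})\otimes x_2(c_{(2)})=x_1(c_{(2)})\otimes x_2(c_{(1)})\in D_1\otimes D_2\ \text{ for all } c\in C\}.$$ Then: (i) $X_1\times_{\mathcal{C}}X_2$ is a sub-presheaf of the argument-wise product $X_1\times X_2$; for every $(x_1,x_2)\in (X_1\times_{\mathcal{C}}X_2)(C)$ the linear map $(x_1,x_2):C\to D_1\otimes D_2$, $c\mapsto x_1(c_{(1)})\otimes x_2(c_{(2)})$, is a coalgebra map (for the tensor product coalgebra structure on $D_1\otimes D_2$), and $(x_1,x_2)\mapsto (x_1,x_2)$ defines an isomorphism of presheaves $X_1\times_{\mathcal{C}}X_2\cong \mathcal{Y}(D_1\otimes D_2)$; in particular $X_1\times_{\mathcal C}X_2\in\mathcal C$. (ii) (Partial associativity) For coalgebras $D_1,D_2,D_3$, $X_i=\mathcal{Y}(D_i)$, and $x_i\in X_i(C)$, the conditions $$(x_1,x_2)\in (X_1\times_{\mathcal{C}}X_2)(C)\ \text{ and }\ ((x_1,x_2),x_3)\in (\mathcal{Y}(D_1\otimes D_2)\times_{\mathcal{C}}X_3)(C)$$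 hold if and only if $$(x_2,x_3)\in (X_2\times_{\mathcal{C}}X_3)(C)\ \text{ and }\ (x_1,(x_2,x_3))\in (X_1\times_{\mathcal{C}}\mathcal{Y}(D_2\otimes D_3))(C),$$ and in that case $((x_1,x_2),x_3)=(x_1,(x_2,x_3))$ as coalgebra maps $C\to D_1\otimes D_2\otimes D_3$. (iii) (Unit) With $\{\bullet\}=\mathcal{Y}(\Bbbk\{\bullet\})$ the terminal presheaf, for every $X=\mathcal{Y}(D)$ one has $\{\bullet\}\times_{\mathcal{C}}X=\{\bullet\}\times X$ and $X\times_{\mathcal{C}}\{\bullet\}=X\times\{\bullet\}$. (iv) (Symmetry) $(x_1,x_2)\in(X_1\times_{\mathcal{C}}X_2)(C)$ iff $(x_2,x_1)\in(X_2\times_{\mathcal{C}}X_1)(C)$, and then $\tau\circ(x_1,x_2)=(x_2,x_1)$, where $\tau:D_1\otimes D_2\to D_2\otimes D_1$ is the flip.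
   Context: $\Bbbk$ is a field of characteristic zero. $\mathrm{Coalg}$ is the category of counital coassociative $\Bbbk$-coalgebras; Sweedler notation $\Delta(c)=c_{(1)}\otimes c_{(2)}$ is used. The tensor product $D_1\otimes D_2$ of coalgebras has $\Delta(d_1\otimes d_2)=d_{1(1)}\otimes d_{2(1)}\otimes d_{1(2)}\otimes d_{2(2)}$ and $\varepsilon(d_1\otimes d_2)=\varepsilon(d_1)\varepsilon(d_2)$; its unit is $\Bbbk\{\bullet\}$ (one group-like basis element). $q\mathrm{Set}$ is the category of presheaves of sets on $\mathrm{Coalg}$, $\mathcal{Y}$ the Yoneda embedding. The only element of $\mathcal{Y}(\Bbbk\{\bullet\})(C)$ is the counit $\varepsilon_C$ (identified with $c\mapsto\varepsilon(c)\bullet$). *)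

(* Defs.v *)
From HB Require Import structures.
From mathcomp Require Import all_boot all_order all_algebra.
From mathcomp Require Import finmap.
From mathcomp.multinomials Require Import monalg.

Set Implicit Arguments.
Unset Strict Implicit.
Unset Printing Implicit Defensive.

Import GRing.Theory.
Local Open Scope ring_scope.

(* Vector spaces are modelled as free vector spaces K[B] = {malg K[B]}
   on a basis type B (every K-vector space has a basis).  The tensor
   product K[A] (x) K[B] is identified with K[A * B], v (x) w being
   \sum v_a w_b (a,b).                                                  *)
Section Coalgebras.
Variable K : fieldType.

Local Notation V B := {malg K[B]}.

Definition bas {B : choiceType} (b : B) : V B := << (1 : K) *g b >>.

Definition lext {B : choiceType} {W : lmodType K} (f : B -> W) (v : V B) : W :=
  \sum_(b <- msupp v) v@_b *: f b.

Definition lextK {B : choiceType} (f : B -> K) (v : V B) : K :=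
  \sum_(b <- msupp v) v@_b * f b.

Definition tens {A B : choiceType} (v : V A) (w : V B) : V (A * B)%type :=
  \sum_(a <- msupp v) \sum_(b <- msupp w) << v@_a * w@_b *g (a, b) >>.

Definition tensmap {A1 A2 B1 B2 : choiceType}
    (f : V A1 -> V B1) (g : V A2 -> V B2) : V (A1 * A2)%type -> V (B1 * B2)%type :=
  lext (fun p : A1 * A2 => tens (f (bas p.1)) (g (bas p.2))).

Definition relabel {A B : choiceType} (h : A -> B) : V A -> V B :=
  lext (fun a => bas (h a)).

Definition flip {A B : Type} (p : A * B) : B * A := (p.2, p.1).
Definition assocr {A B C : Type} (p : (A * B) * C) : A * (B * C) :=
  (p.1.1, (p.1.2, p.2)).
Definition midswap {A A' B B' : Type} (p : (A * A') * (B * B')) :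
  (A * B) * (A' * B') := ((p.1.1, p.2.1), (p.1.2, p.2.2)).

Record coalg := Coalg {
  cbasis : choiceType;
  cdelta_b : cbasis -> V (cbasis * cbasis)%type;
  ceps_b : cbasis -> K }.

Definition cvec (C : coalg) := V (cbasis C).

Definition Delta (C : coalg) : cvec C -> V (cbasis C * cbasis C)%type :=
  lext (@cdelta_b C).
Definition eps (C : coalg) : cvec C -> K := lextK (@ceps_b C).

Definition is_coalgebra (C : coalg) : Prop :=
  [/\ forall c : cvec C,
        relabel assocr (tensmap (@Delta C) idfun (Delta c))
        = tensmap idfun (@Delta C) (Delta c),
      forall c : cvec C,
        lext (fun p : cbasis C * cbasis C => eps (bas p.1) *: bas p.2) (Delta c) = c
    & forall c : cvec C,
        lext (fun p : cbasis C * cbasis C => eps (bas p.2) *: bas p.1) (Delta c) = c].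

Definition coalg_map (C D : coalg) (f : cvec C -> cvec D) : Prop :=
  [/\ linear f,
      forall c, Delta (f c) = tensmap f f (Delta c)
    & forall c, eps (f c) = eps c].

Definition tensor_coalg (D1 D2 : coalg) : coalg :=
  @Coalg (cbasis D1 * cbasis D2)%type
    (fun p => relabel midswap (tens (cdelta_b p.1) (cdelta_b p.2)))
    (fun p => ceps_b p.1 * ceps_b p.2).

Definition unit_coalg : coalg :=
  @Coalg unit (fun _ => bas (tt, tt)) (fun _ => 1).

Definition fprod_cond (C D1 D2 : coalg)
    (x1 : cvec C -> cvec D1) (x2 : cvec C -> cvec D2) : Prop :=
  forall c : cvec C,
    tensmap x1 x2 (Delta c) = tensmap x1 x2 (relabel flip (Delta c)).

Definition in_fprod (C D1 D2 : coalg)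
    (x1 : cvec C -> cvec D1) (x2 : cvec C -> cvec D2) : Prop :=
  [/\ coalg_map x1, coalg_map x2 & fprod_cond x1 x2].

Definition pairing (C D1 D2 : coalg)
    (x1 : cvec C -> cvec D1) (x2 : cvec C -> cvec D2) :
    cvec C -> cvec (tensor_coalg D1 D2) :=
  fun c => tensmap x1 x2 (Delta c).

End Coalgebras.

(* Main.v *)
Require Import Defs.
From HB Require Import structures.
From mathcomp Require Import all_boot all_order all_algebra.
From mathcomp Require Import finmap.
From mathcomp.multinomials Require Import monalg.
From Stdlib Require Import Setoid Morphisms FunctionalExtensionality.

Set Implicit Arguments.
Unset Strict Implicit.
Unset Printing Implicit Defensive.
Import GRing.Theory.
Local Open Scope ring_scope.


Section Lin.
Variable K : fieldType.
Local Notation V B := {malg K[B]}.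

Section LinMap.
Variables (U W : lmodType K) (f : U -> W) (Hf : linear f).
Lemma linD u v : f (u + v) = f u + f v.
Proof. by case: (GRing.semilinear_linear Hf) => _ ->. Qed.
Lemma linZ a u : f (a *: u) = a *: f u.
Proof. by case: (GRing.semilinear_linear Hf) => ->. Qed.
Lemma lin0 : f 0 = 0.
Proof. by rewrite -(scale0r 0) linZ scale0r. Qed.
Lemma lin_sum (I : Type) (s : seq I) (P : pred I) (F : I -> U) :
  f (\sum_(i <- s | P i) F i) = \sum_(i <- s | P i) f (F i).
Proof. exact: (big_morph f linD lin0). Qed.
End LinMap.

Lemma lin_comp (U1 U2 U3 : lmodType K) (f : U2 -> U3) (g : U1 -> U2) :
  linear f -> linear g -> linear (f \o g).
Proof. by move=> Hf Hg a u v /=; rewrite Hg Hf. Qed.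

Lemma linear_id (U : lmodType K) : linear (@idfun U).
Proof. by []. Qed.

Lemma basZ (B : choiceType) (c : K) (b : B) : << c *g b >> = c *: bas K b.
Proof.
apply/malgP => k; rewrite mcoeffZ !mcoeffU.
by case: eqP => _; rewrite ?mulr1 ?mulr0.
Qed.

Lemma msupp_bas (B : choiceType) (b : B) : msupp (bas K b) = [fset b]%fset.
Proof. by rewrite /bas msuppU oner_eq0. Qed.

Section LextB.
Variables (B : choiceType) (W : lmodType K).
Implicit Types (f g : B -> W) (v : V B).

Lemma lextEw f v (d : {fset B}) : (msupp v `<=` d)%fset ->
  lext f v = \sum_(b <- d) v@_b *: f b.
Proof.
move=> sd; rewrite /lext; apply: big_fset_incl => // b _ /mcoeff_outdom ->.
by rewrite scale0r.
Qed.

Lemma lext_is_linear f : linear (lext f).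
Proof.
move=> a u v.
have s1 : (msupp (a *: u + v) `<=` msupp u `|` msupp v)%fset.
  apply: fsubset_trans (msuppD_le _ _) _.
  by apply: fsetSU; apply: msuppZ_le.
rewrite (lextEw _ s1) (lextEw _ (fsubsetUl (msupp u) (msupp v))).
rewrite (lextEw _ (fsubsetUr (msupp u) (msupp v))) scaler_sumr -big_split /=.
by apply: eq_bigr => b _; rewrite mcoeffD mcoeffZ scalerDl scalerA.
Qed.

Lemma lext_bas f b : lext f (bas K b) = f b.
Proof. by rewrite /lext msupp_bas big_seq_fset1 /bas mcoeffUU scale1r. Qed.

Lemma eq_lext f g v : f =1 g -> lext f v = lext g v.
Proof. by move=> e; apply: eq_bigr => b _; rewrite e. Qed.

Lemma lextF_lin a f g v :
  lext (fun b => a *: f b + g b) v = a *: lext f v + lext g v.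
Proof.
rewrite /lext scaler_sumr -big_split /=; apply: eq_bigr => b _.
by rewrite scalerDr !scalerA mulrC.
Qed.

Lemma lextF0 v : lext (fun _ : B => (0 : W)) v = 0.
Proof. by rewrite /lext big1 // => b _; rewrite scaler0. Qed.

Lemma lextFZ (k : B -> K) (w : W) v :
  lext (fun b => k b *: w) v = lextK k v *: w.
Proof.
rewrite /lext /lextK scaler_suml; apply: eq_bigr => b _; by rewrite scalerA.
Qed.

Lemma lextFZ' (a : K) f v : lext (fun b => a *: f b) v = a *: lext f v.
Proof. by rewrite -[RHS]addr0 -(lextF0 v) -lextF_lin; apply: eq_lext => b; rewrite addr0. Qed.

End LextB.

Lemma lext_comp (B : choiceType) (W W' : lmodType K) (phi : W -> W')
  (f : B -> W) v : linear phi -> phi (lext f v) = lext (phi \o f) v.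
Proof. by move=> Hphi; rewrite /lext lin_sum //; apply: eq_bigr => b _; rewrite linZ. Qed.

Lemma lext_id (B : choiceType) (v : V B) : lext (bas K) v = v.
Proof.
rewrite {2}(monalgE v) /lext; apply: eq_bigr => b _; by rewrite basZ.
Qed.

Lemma lext_phi (B : choiceType) (W : lmodType K) (phi : V B -> W) v :
  linear phi -> lext (fun b => phi (bas K b)) v = phi v.
Proof. by move=> Hphi; rewrite -{2}(lext_id v) lext_comp. Qed.

Lemma lin_eq (B : choiceType) (W : lmodType K) (f g : V B -> W) :
  linear f -> linear g -> (forall b, f (bas K b) = g (bas K b)) -> f =1 g.
Proof.
by move=> Hf Hg e v; rewrite -(lext_phi v Hf) -(lext_phi v Hg); apply: eq_lext.
Qed.

Lemma lext_lext (A B : choiceType) (W : lmodType K) (F : B -> W) (G : A -> V B) v :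
  lext F (lext G v) = lext (fun a => lext F (G a)) v.
Proof. by rewrite lext_comp //; apply: lext_is_linear. Qed.

Lemma lext_swap (A B : choiceType) (W : lmodType K) (H : A -> B -> W) u v :
  lext (fun a => lext (fun b => H a b) v) u = lext (fun b => lext (fun a => H a b) u) v.
Proof.
rewrite /lext.
under eq_bigr => a _ do rewrite scaler_sumr.
rewrite exchange_big /=; apply: eq_bigr => b _; rewrite scaler_sumr.
by apply: eq_bigr => a _; rewrite !scalerA mulrC.
Qed.

Lemma tensE (A B : choiceType) (u : V A) (v : V B) :
  tens u v = lext (fun a => lext (fun b => bas K (a, b)) v) u.
Proof.
rewrite /tens /lext; apply: eq_bigr => a _; rewrite scaler_sumr.
by apply: eq_bigr => b _; rewrite basZ scalerA.
Qed.

Lemma lext_tens (A B : choiceType) (W : lmodType K) (F : A * B -> W) u v :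
  lext F (tens u v) = lext (fun a => lext (fun b => F (a, b)) v) u.
Proof.
rewrite tensE lext_lext; apply: eq_lext => a.
by rewrite lext_lext; apply: eq_lext => b; rewrite lext_bas.
Qed.

Lemma tens_bas (A B : choiceType) (a : A) (b : B) :
  tens (bas K a) (bas K b) = bas K (a, b).
Proof. by rewrite tensE !lext_bas. Qed.

Lemma tens_linl (A B : choiceType) (v : V B) : linear (fun u : V A => tens u v).
Proof. by move=> k u u'; rewrite !tensE lext_is_linear. Qed.

Lemma tens_linr (A B : choiceType) (u : V A) : linear (fun v : V B => tens u v).
Proof.
move=> k v v'; rewrite !tensE -lextF_lin; apply: eq_lext => a.
by rewrite lext_is_linear.
Qed.

Lemma lext_is_linear' (B : choiceType) (W : lmodType K) (f : B -> W) :
  linear (lext f).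
Proof. exact: lext_is_linear. Qed.

Lemma relabel_linear (A B : choiceType) (h : A -> B) : linear (@relabel K A B h).
Proof. exact: lext_is_linear. Qed.

Lemma tensmap_linear (A1 A2 B1 B2 : choiceType) (f : V A1 -> V B1) (g : V A2 -> V B2) :
  linear (tensmap f g).
Proof. exact: lext_is_linear. Qed.

Lemma lext_relabel (A B : choiceType) (W : lmodType K) (F : B -> W) (h : A -> B) v :
  lext F (@relabel K A B h v) = lext (fun a => F (h a)) v.
Proof. by rewrite /relabel lext_lext; apply: eq_lext => a; rewrite lext_bas. Qed.

Lemma lext_tensmap (A1 A2 B1 B2 : choiceType) (W : lmodType K)
  (f : V A1 -> V B1) (g : V A2 -> V B2) (F : B1 * B2 -> W) v :
  lext F (tensmap f g v) =
  lext (fun p => lext (fun a => lext (fun b => F (a, b)) (g (bas K p.2))) (f (bas K p.1))) v.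
Proof. by rewrite /tensmap lext_lext; apply: eq_lext => p; rewrite lext_tens. Qed.

Lemma vec_ext (B : choiceType) (u v : V B) :
  (forall (F : B -> V B), lext F u = lext F v) -> u = v.
Proof. by move=> e; rewrite -(lext_id u) -(lext_id v). Qed.


Lemma lextK_lext_eq (B : choiceType) (f : B -> K) (v : V B) :
  lextK f v = @lext K B K^o f v.
Proof. by []. Qed.

Lemma lextK_bas (B : choiceType) (f : B -> K) b : lextK f (bas K b) = f b.
Proof. by rewrite lextK_lext_eq lext_bas. Qed.

Lemma lext_fbas (A B : choiceType) (W : lmodType K) (f : V A -> V B) (G : B -> W) v :
  linear f -> lext (fun a => lext G (f (bas K a))) v = lext G (f v).
Proof.
move=> Hf; apply: (lext_phi (phi := fun u => lext G (f u))).
by apply: lin_comp => //; apply: lext_is_linear.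
Qed.

Lemma lext_fbasK (A B : choiceType) (f : V A -> V B) (G : B -> K) v :
  linear f -> lext (W := K^o) (fun a => lextK G (f (bas K a))) v = lextK G (f v).
Proof. exact: lext_fbas. Qed.

End Lin.

#[export] Instance lext_proper (K : fieldType) (B : choiceType) (W : lmodType K) :
  Proper (pointwise_relation B eq ==> eq ==> eq) (@lext K B W).
Proof. by move=> f g e u v ->; apply: eq_lext. Qed.

Section Coal.
Variable K : fieldType.
Local Notation V B := {malg K[B]}.

Section OneC.
Variable C : coalg K.
Local Notation cb := (cbasis C).
Local Notation cd := (@cdelta_b K C).
Local Notation ce := (@ceps_b K C).

Lemma Delta_bas (b : cb) : Delta (bas K b) = cd b.
Proof. exact: lext_bas. Qed.

Lemma Delta_linear : linear (@Delta K C).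
Proof. exact: lext_is_linear. Qed.

Lemma lext_Delta (W : lmodType K) (F : cb * cb -> W) v :
  lext F (Delta v) = lext (fun a => lext F (cd a)) v.
Proof. exact: lext_lext. Qed.

Lemma eps_bas (b : cb) : eps (bas K b) = ce b.
Proof. exact: lextK_bas. Qed.

Lemma eps_lin a (u v : cvec C) : eps (a *: u + v) = a * eps u + eps v.
Proof. exact: (@lext_is_linear K cb K^o). Qed.

Lemma lextK_eps (W : lmodType K) (G : W) v : lext (fun b => ce b *: G) v = eps v *: G.
Proof. exact: lextFZ. Qed.

Hypothesis HC : is_coalgebra C.

Lemma counitL (W : lmodType K) (G : cb -> W) c :
  lext (fun p => ce p.1 *: G p.2) (Delta c) = lext G c.
Proof.
case: HC => _ HL _; rewrite -{2}(HL c) lext_lext; apply: eq_lext => p.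
by rewrite (linZ (lext_is_linear G)) lext_bas eps_bas.
Qed.

Lemma counitR (W : lmodType K) (G : cb -> W) c :
  lext (fun p => ce p.2 *: G p.1) (Delta c) = lext G c.
Proof.
case: HC => _ _ HR; rewrite -{2}(HR c) lext_lext; apply: eq_lext => p.
by rewrite (linZ (lext_is_linear G)) lext_bas eps_bas.
Qed.

Lemma counitL_bas (W : lmodType K) (G : cb -> W) b :
  lext (fun p => ce p.1 *: G p.2) (cd b) = G b.
Proof. by rewrite -Delta_bas counitL lext_bas. Qed.

Lemma counitR_bas (W : lmodType K) (G : cb -> W) b :
  lext (fun p => ce p.2 *: G p.1) (cd b) = G b.
Proof. by rewrite -Delta_bas counitR lext_bas. Qed.

Lemma coassoc (W : lmodType K) (F : cb -> cb -> cb -> W) c :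
  lext (fun p => lext (fun q => F q.1 q.2 p.2) (cd p.1)) (Delta c) =
  lext (fun p => lext (fun q => F p.1 q.1 q.2) (cd p.2)) (Delta c).
Proof.
case: HC => HA _ _.
have := congr1 (lext (fun t : cb * (cb * cb) => F t.1 t.2.1 t.2.2)) (HA c).
rewrite lext_relabel !lext_tensmap /=.
setoid_rewrite Delta_bas; setoid_rewrite lext_bas.
by [].
Qed.

Lemma coassoc_bas (W : lmodType K) (F : cb -> cb -> cb -> W) b :
  lext (fun p => lext (fun q => F q.1 q.2 p.2) (cd p.1)) (cd b) =
  lext (fun p => lext (fun q => F p.1 q.1 q.2) (cd p.2)) (cd b).
Proof. by rewrite -Delta_bas coassoc. Qed.

End OneC.
End Coal.

Section Maps.
Variable K : fieldType.
Local Notation V B := {malg K[B]}.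

Lemma tensmap_comp (A1 A2 B1 B2 C1 C2 : choiceType)
  (f : V B1 -> V C1) (g : V B2 -> V C2) (f' : V A1 -> V B1) (g' : V A2 -> V B2) w :
  linear f -> linear g ->
  tensmap f g (tensmap f' g' w) = tensmap (f \o f') (g \o g') w.
Proof.
move=> Hf Hg; apply: vec_ext => F.
rewrite !lext_tensmap /=; apply: eq_lext => p.
setoid_rewrite (lext_swap _ (g' (bas K p.2))).
setoid_rewrite (lext_fbas _ _ Hg).
by rewrite (lext_fbas _ _ Hf).
Qed.

Lemma tensmap_flip (A1 A2 B1 B2 : choiceType)
  (f : V A1 -> V B1) (g : V A2 -> V B2) w :
  tensmap f g (@relabel K _ _ flip w) = @relabel K _ _ flip (tensmap g f w).
Proof.
apply: vec_ext => F; rewrite lext_tensmap !lext_relabel lext_tensmap.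
by apply: eq_lext => p; rewrite lext_swap.
Qed.

Section CM.
Variables (C D : coalg K) (x : cvec C -> cvec D) (Hx : coalg_map x).

Lemma cm_lin : linear x. Proof. by case: Hx. Qed.
Lemma cm_Delta v : Delta (x v) = tensmap x x (Delta v). Proof. by case: Hx. Qed.
Lemma cm_eps v : eps (x v) = eps v. Proof. by case: Hx. Qed.

Lemma cm_collapse (W : lmodType K) (H : cbasis D * cbasis D -> W) v :
  lext (fun a => lext H (cdelta_b a)) (x v) =
  lext (fun q => lext (fun s => lext (fun t => H (s, t)) (x (bas K q.2))) (x (bas K q.1)))
       (Delta v).
Proof. by rewrite -lext_Delta cm_Delta lext_tensmap. Qed.

Lemma cm_epsZ (W : lmodType K) (G : W) v :
  lext (fun d => ceps_b d *: G) (x v) = eps v *: G.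
Proof. by rewrite lextK_eps cm_eps. Qed.
End CM.

Lemma coalg_map_comp (C1 C2 C3 : coalg K) (f : cvec C2 -> cvec C3) (g : cvec C1 -> cvec C2) :
  coalg_map f -> coalg_map g -> coalg_map (f \o g).
Proof.
move=> Hf Hg; split.
- exact: lin_comp (cm_lin Hf) (cm_lin Hg).
- by move=> c /=; rewrite (cm_Delta Hf) (cm_Delta Hg) tensmap_comp //; apply: cm_lin.
- by move=> c /=; rewrite (cm_eps Hf) (cm_eps Hg).
Qed.

Section Cond.
Variables (C D1 D2 : coalg K) (x1 : cvec C -> cvec D1) (x2 : cvec C -> cvec D2).

Lemma cond_lext : fprod_cond x1 x2 -> forall (W : lmodType K) F c,
  lext (fun p => lext (fun a => lext (fun b => F (a, b) : W) (x2 (bas K p.2))) (x1 (bas K p.1)))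
       (Delta c) =
  lext (fun p => lext (fun a => lext (fun b => F (a, b)) (x2 (bas K p.1))) (x1 (bas K p.2)))
       (Delta c).
Proof.
move=> H W F c; have := congr1 (lext F) (H c).
by rewrite !lext_tensmap lext_relabel.
Qed.

Lemma lext_cond : (forall (W : lmodType K) F c,
  lext (fun p => lext (fun a => lext (fun b => F (a, b) : W)
         (x2 (bas K p.2))) (x1 (bas K p.1))) (Delta c) =
  lext (fun p => lext (fun a => lext (fun b => F (a, b)) (x2 (bas K p.1))) (x1 (bas K p.2)))
       (Delta c)) -> fprod_cond x1 x2.
Proof.
move=> H c; apply: vec_ext => F.
have := H _ F c.
by rewrite !lext_tensmap lext_relabel.
Qed.

Lemma cond_bas : fprod_cond x1 x2 -> forall (W : lmodType K) F b,
  lext (fun p => lext (fun a => lext (fun b => F (a, b) : W) (x2 (bas K p.2))) (x1 (bas K p.1)))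
       (cdelta_b b) =
  lext (fun p => lext (fun a => lext (fun b => F (a, b)) (x2 (bas K p.1))) (x1 (bas K p.2)))
       (cdelta_b b).
Proof. by move=> H W F b; rewrite -Delta_bas cond_lext. Qed.

End Cond.

End Maps.

Section Easy.
Variable K : fieldType.
Local Notation V B := {malg K[B]}.

Lemma fprod_comp (C C' D1 D2 : coalg K) (g : cvec C' -> cvec C) (Hg : coalg_map g)
  (x1 : cvec C -> cvec D1) (x2 : cvec C -> cvec D2) :
  in_fprod x1 x2 -> in_fprod (x1 \o g) (x2 \o g).
Proof.
case=> H1 H2 Hc; split; try exact: coalg_map_comp.
move=> c.
rewrite -(tensmap_comp g g (Delta c) (cm_lin H1) (cm_lin H2)).
rewrite -(tensmap_comp g g (relabel flip (Delta c)) (cm_lin H1) (cm_lin H2)).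
by rewrite (tensmap_flip g g) -(cm_Delta Hg c); apply: Hc.
Qed.

Lemma pairing_nat (C C' D1 D2 : coalg K) (g : cvec C' -> cvec C) (Hg : coalg_map g)
  (x1 : cvec C -> cvec D1) (x2 : cvec C -> cvec D2) :
  in_fprod x1 x2 -> pairing (x1 \o g) (x2 \o g) = pairing x1 x2 \o g.
Proof.
case=> H1 H2 Hc; apply: functional_extensionality => c.
rewrite /pairing /= -(tensmap_comp g g (Delta c) (cm_lin H1) (cm_lin H2)).
by rewrite -(cm_Delta Hg).
Qed.

Section Proj.
Variables (C D1 D2 : coalg K) (HC : is_coalgebra C).
Variables (x1 : cvec C -> cvec D1) (x2 : cvec C -> cvec D2).

Lemma pair_proj1 : linear x1 -> coalg_map x2 -> forall c,
  lext (fun p => ceps_b p.2 *: bas K p.1) (pairing x1 x2 c) = x1 c.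
Proof.
move=> L1 H2 c; rewrite /pairing lext_tensmap /=.
setoid_rewrite (cm_epsZ H2); setoid_rewrite eps_bas.
setoid_rewrite lextFZ'; setoid_rewrite lext_id.
rewrite (counitR HC (fun b => x1 (bas K b))); exact: lext_phi.
Qed.

Lemma pair_proj2 : coalg_map x1 -> linear x2 -> forall c,
  lext (fun p => ceps_b p.1 *: bas K p.2) (pairing x1 x2 c) = x2 c.
Proof.
move=> H1 L2 c; rewrite /pairing lext_tensmap /=.
setoid_rewrite lextFZ'; setoid_rewrite lext_id.
setoid_rewrite (cm_epsZ H1); setoid_rewrite eps_bas.
rewrite (counitL HC (fun b => x2 (bas K b))); exact: lext_phi.
Qed.
End Proj.

Lemma pair_inj (C D1 D2 : coalg K) (HC : is_coalgebra C)
  (x1 y1 : cvec C -> cvec D1) (x2 y2 : cvec C -> cvec D2) :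
  in_fprod x1 x2 -> in_fprod y1 y2 ->
  pairing x1 x2 = pairing y1 y2 -> x1 = y1 /\ x2 = y2.
Proof.
case=> H1 H2 _ [G1 G2 _] e; split; apply: functional_extensionality => c.
- by rewrite -(pair_proj1 HC (cm_lin H1) H2) e (pair_proj1 HC (cm_lin G1) G2).
- by rewrite -(pair_proj2 HC H1 (cm_lin H2)) e (pair_proj2 HC G1 (cm_lin G2)).
Qed.

Lemma unit_vec (w : cvec (unit_coalg K)) : w = eps w *: bas K tt.
Proof.
rewrite -{1}(lext_id w) /eps -lextFZ; apply: eq_lext => -[] /=.
by rewrite scale1r.
Qed.

Lemma unit_map (C : coalg K) (e : cvec C -> cvec (unit_coalg K)) :
  coalg_map e -> forall v, e v = eps v *: bas K tt.
Proof. by move=> He v; rewrite {1}(unit_vec (e v)) (cm_eps He). Qed.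

Lemma unit_lext (C : coalg K) (e : cvec C -> cvec (unit_coalg K)) (He : coalg_map e)
  (W : lmodType K) (G : cbasis (unit_coalg K) -> W) d : lext G (e (bas K d)) = ceps_b d *: G tt.
Proof. by rewrite (unit_map He) eps_bas (linZ (lext_is_linear G)) lext_bas. Qed.

Lemma cond_unit_l (C D : coalg K) (HC : is_coalgebra C)
  (e : cvec C -> cvec (unit_coalg K)) (x : cvec C -> cvec D) :
  coalg_map e -> fprod_cond e x.
Proof.
move=> He; apply: lext_cond => W F c.
under eq_lext => p do rewrite (unit_lext He (fun a => lext (fun b => F (a,b)) (x (bas K p.2))) p.1).
under [in RHS]eq_lext => p do rewrite (unit_lext He (fun a => lext (fun b => F (a,b)) (x (bas K p.1))) p.2).
by rewrite (counitL HC (fun d => lext (fun b => F (tt, b)) (x (bas K d))))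
           (counitR HC (fun d => lext (fun b => F (tt, b)) (x (bas K d)))).
Qed.

Lemma cond_unit_r (C D : coalg K) (HC : is_coalgebra C)
  (e : cvec C -> cvec (unit_coalg K)) (x : cvec C -> cvec D) :
  coalg_map e -> fprod_cond x e.
Proof.
move=> He; apply: lext_cond => W F c.
under eq_lext => p do under eq_lext => a do rewrite (unit_lext He).
under [in RHS]eq_lext => p do under eq_lext => a do rewrite (unit_lext He).
under eq_lext => p do rewrite lextFZ'.
under [in RHS]eq_lext => p do rewrite lextFZ'.
by rewrite (counitR HC (fun d => lext (fun a => F (a, tt)) (x (bas K d))))
           (counitL HC (fun d => lext (fun a => F (a, tt)) (x (bas K d)))).
Qed.

Lemma cond_sym (C D1 D2 : coalg K) (x1 : cvec C -> cvec D1) (x2 : cvec C -> cvec D2) :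
  fprod_cond x1 x2 -> fprod_cond x2 x1.
Proof.
move=> H; apply: lext_cond => W F c.
setoid_rewrite (lext_swap _ _ (x1 _)).
have := cond_lext H (fun q => F (q.2, q.1)) c => /= ->.
by [].
Qed.

Lemma pair_flip (C D1 D2 : coalg K) (x1 : cvec C -> cvec D1) (x2 : cvec C -> cvec D2) :
  fprod_cond x1 x2 -> @relabel K _ _ flip \o pairing x1 x2 = pairing x2 x1.
Proof.
move=> H.
have E : forall (W : lmodType K) (F : cbasis D2 * cbasis D1 -> W) c,
    lext F (relabel flip (pairing x1 x2 c)) = lext F (pairing x2 x1 c).
  move=> W F c; rewrite lext_relabel /pairing !lext_tensmap /flip /=.
  rewrite (cond_lext H (fun q => F (q.2, q.1)) c) /=.
  by setoid_rewrite (lext_swap _ _ (x1 _)).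
by apply: functional_extensionality => c /=; apply: vec_ext => F; apply: E.
Qed.

End Easy.

Section Pair.
Variable K : fieldType.
Local Notation V B := {malg K[B]}.

Lemma S4 (C : coalg K) (HC : is_coalgebra C) (W : lmodType K)
  (Psi : cbasis C -> cbasis C -> cbasis C -> cbasis C -> W) c :
  lext (fun p => lext (fun q' => lext (fun q => Psi q'.1 q'.2 q.1 q.2) (cdelta_b p.2))
                      (cdelta_b p.1)) (Delta c) =
  lext (fun p => lext (fun q => lext (fun r => Psi p.1 r.1 r.2 q.2) (cdelta_b q.1))
                      (cdelta_b p.2)) (Delta c).
Proof.
rewrite (coassoc HC (fun a b d => lext (fun q => Psi a b q.1 q.2) (cdelta_b d))).
apply: eq_lext => p.
by rewrite -(coassoc_bas HC (fun a b d => Psi p.1 a b d)).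
Qed.

Lemma lext_DeltaT (D1 D2 : coalg K) (W : lmodType K)
  (F : (cbasis D1 * cbasis D2) * (cbasis D1 * cbasis D2) -> W) w :
  lext F (Delta (C := tensor_coalg D1 D2) w) =
  lext (fun s => lext (fun r1 => lext (fun r2 => F ((r1.1, r2.1), (r1.2, r2.2)))
                 (cdelta_b s.2)) (cdelta_b s.1)) w.
Proof.
rewrite /Delta lext_lext; apply: eq_lext => s.
by rewrite /= lext_relabel lext_tens.
Qed.


Lemma lextK_mul (B : choiceType) (k : K) (f : B -> K) (v : V B) :
  @lext K B K^o (fun b => k * f b) v = k * lextK f v.
Proof.
rewrite /lext /lextK mulr_sumr; apply: eq_bigr => b _.
by rewrite /GRing.scale /= mulrCA.
Qed.

Lemma epsE' (C : coalg K) (v : cvec C) : lextK (@ceps_b K C) v = eps v.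
Proof. by []. Qed.

Section PD.
Variables (C D1 D2 : coalg K) (HC : is_coalgebra C).
Variables (x1 : cvec C -> cvec D1) (x2 : cvec C -> cvec D2).
Hypotheses (H1 : coalg_map x1) (H2 : coalg_map x2) (Hc : fprod_cond x1 x2).

Lemma pairing_DeltaW (W : lmodType K) F c :
  lext F (Delta (C := tensor_coalg D1 D2) (pairing x1 x2 c)) =
  lext F (tensmap (pairing x1 x2) (pairing x1 x2) (Delta c)) :> W.
Proof.
rewrite lext_DeltaT /pairing lext_tensmap /=.
setoid_rewrite (lext_swap _ (x2 _)).
setoid_rewrite (cm_collapse H2).
setoid_rewrite Delta_bas.
setoid_rewrite (cm_collapse H1).
setoid_rewrite Delta_bas.
rewrite lext_tensmap.
setoid_rewrite lext_tensmap.
setoid_rewrite lext_tensmap.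
setoid_rewrite Delta_bas.
rewrite /=.
setoid_rewrite (lext_swap _ (x2 _) (cdelta_b _)).
repeat setoid_rewrite (lext_swap _ (x1 _) (cdelta_b _)).
pose PL := fun a b d e => lext (fun s => lext (fun t => lext (fun s0 => lext (fun t0 =>
    F ((s, s0), (t, t0))) (x2 (bas K e))) (x2 (bas K d))) (x1 (bas K b))) (x1 (bas K a)).
pose PR := fun a b d e => lext (fun s => lext (fun s0 => lext (fun t => lext (fun t0 =>
    F ((s, s0), (t, t0))) (x2 (bas K e))) (x1 (bas K d))) (x2 (bas K b))) (x1 (bas K a)).
rewrite (S4 HC PL) (S4 HC PR).
apply: eq_lext => p; apply: eq_lext => q; rewrite /PL /PR.
rewrite [LHS]lext_swap [RHS]lext_swap; apply: eq_lext => s.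
rewrite (cond_bas Hc (fun ts => lext (fun t0 => F ((s, ts.2), (ts.1, t0))) (x2 (bas K q.2))) q.1).
by apply: eq_lext => r; rewrite lext_swap.
Qed.

Lemma pairing_eps c : eps (C := tensor_coalg D1 D2) (pairing x1 x2 c) = eps c.
Proof.
change (@lext K _ K^o (fun p : cbasis D1 * cbasis D2 => ceps_b p.1 * ceps_b p.2)
   (tensmap x1 x2 (Delta c)) = eps c).
rewrite lext_tensmap /=.
under eq_lext => p do under eq_lext => a do rewrite lextK_mul epsE' (cm_eps H2) eps_bas mulrC.
under eq_lext => p do rewrite lextK_mul epsE' (cm_eps H1) eps_bas.
exact: (counitR HC (W := K^o) (@ceps_b K C) c).
Qed.

Lemma pairing_coalg : coalg_map (pairing x1 x2).
Proof.
split.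
- exact: lin_comp (tensmap_linear _ _) (@Delta_linear K C).
- by move=> c; apply: vec_ext => F; apply: pairing_DeltaW.
- exact: pairing_eps.
Qed.
End PD.
End Pair.

Section Surj.
Variable K : fieldType.
Local Notation V B := {malg K[B]}.

Lemma lext_Zbas (B : choiceType) (W : lmodType K) (G : B -> W) (k : K) (b : B) :
  lext G (k *: bas K b) = k *: G b.
Proof. by rewrite (linZ (lext_is_linear G)) lext_bas. Qed.

Variables (D1 D2 : coalg K) (HD1 : is_coalgebra D1) (HD2 : is_coalgebra D2).
Local Notation T := (tensor_coalg D1 D2).

Definition R1 : cvec T -> cvec D1 :=
  lext (fun p : cbasis D1 * cbasis D2 => ceps_b p.2 *: bas K p.1).
Definition R2 : cvec T -> cvec D2 :=
  lext (fun p : cbasis D1 * cbasis D2 => ceps_b p.1 *: bas K p.2).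

Lemma R1_bas (a : cbasis D1) (b : cbasis D2) : R1 (bas K (a, b)) = ceps_b b *: bas K a.
Proof. exact: lext_bas. Qed.
Lemma R2_bas (a : cbasis D1) (b : cbasis D2) : R2 (bas K (a, b)) = ceps_b a *: bas K b.
Proof. exact: lext_bas. Qed.

Lemma epsc_l (C : coalg K) (HC : is_coalgebra C) (b : cbasis C) :
  @lext K _ K^o (fun p : cbasis C * cbasis C => ceps_b p.1 * ceps_b p.2) (cdelta_b b) = ceps_b b.
Proof. exact: (counitL_bas HC (W := K^o) (@ceps_b K C) b). Qed.
Lemma epsc_r (C : coalg K) (HC : is_coalgebra C) (b : cbasis C) :
  @lext K _ K^o (fun p : cbasis C * cbasis C => ceps_b p.2 * ceps_b p.1) (cdelta_b b) = ceps_b b.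
Proof. exact: (counitR_bas HC (W := K^o) (@ceps_b K C) b). Qed.

Lemma R1_DeltaW (W : lmodType K) (F : cbasis D1 * cbasis D1 -> W) w :
  lext F (Delta (R1 w)) = lext F (tensmap R1 R1 (Delta (C := T) w)).
Proof.
rewrite lext_tensmap lext_DeltaT /R1 lext_Delta lext_lext; apply: eq_lext => s /=.
rewrite lext_Zbas.
under [RHS]eq_lext => r1 do under eq_lext => r2 do rewrite !lext_bas !lext_Zbas scalerA /=.
under [RHS]eq_lext => r1 do rewrite (lextFZ (fun r2 : cbasis D2 * cbasis D2 => ceps_b r2.1 * ceps_b r2.2)) lextK_lext_eq (epsc_l HD2).
rewrite lextFZ'; congr (_ *: _).
by apply: eq_lext => -[].
Qed.


Lemma R2_DeltaW (W : lmodType K) (F : cbasis D2 * cbasis D2 -> W) w :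
  lext F (Delta (R2 w)) = lext F (tensmap R2 R2 (Delta (C := T) w)).
Proof.
rewrite lext_tensmap lext_DeltaT /R2 lext_Delta lext_lext; apply: eq_lext => s /=.
rewrite lext_Zbas.
under [RHS]eq_lext => r1 do under eq_lext => r2 do rewrite !lext_bas !lext_Zbas scalerA /=.
under [RHS]eq_lext => r1 do rewrite lextFZ'.
rewrite (lextFZ (fun r1 : cbasis D1 * cbasis D1 => ceps_b r1.1 * ceps_b r1.2)).
rewrite lextK_lext_eq (epsc_l HD1); congr (_ *: _).
by apply: eq_lext => -[].
Qed.

Lemma R1_eps w : eps (R1 w) = eps (C := T) w.
Proof.
change (@lext K _ K^o (@ceps_b K D1) (R1 w) =
        @lext K _ K^o (fun p : cbasis D1 * cbasis D2 => ceps_b p.1 * ceps_b p.2) w).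
rewrite /R1 lext_lext; apply: eq_lext => p; rewrite lext_Zbas /=.
by rewrite /GRing.scale /= mulrC.
Qed.

Lemma R2_eps w : eps (R2 w) = eps (C := T) w.
Proof.
change (@lext K _ K^o (@ceps_b K D2) (R2 w) =
        @lext K _ K^o (fun p : cbasis D1 * cbasis D2 => ceps_b p.1 * ceps_b p.2) w).
rewrite /R2 lext_lext; apply: eq_lext => p; rewrite lext_Zbas /=.
by rewrite /GRing.scale /=.
Qed.

Lemma R1_coalg : coalg_map R1.
Proof.
split; first exact: lext_is_linear.
- by move=> w; apply: vec_ext => F; apply: R1_DeltaW.
- exact: R1_eps.
Qed.

Lemma R2_coalg : coalg_map R2.
Proof.
split; first exact: lext_is_linear.
- by move=> w; apply: vec_ext => F; apply: R2_DeltaW.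
- exact: R2_eps.
Qed.

Lemma R12_idW (W : lmodType K) (F : cbasis D1 * cbasis D2 -> W) w :
  lext F (tensmap R1 R2 (Delta (C := T) w)) = lext F w.
Proof.
rewrite lext_tensmap lext_DeltaT; apply: eq_lext => s /=.
under eq_lext => r1 do under eq_lext => r2 do rewrite /R1 /R2 !lext_bas !lext_Zbas /=.
under eq_lext => r1 do rewrite (counitL_bas HD2 (fun b => ceps_b r1.2 *: F (r1.1, b)) s.2).
rewrite (counitR_bas HD1 (fun a => F (a, s.2)) s.1).
by case: s.
Qed.

Lemma R12_flipW (W : lmodType K) (F : cbasis D1 * cbasis D2 -> W) w :
  lext F (tensmap R1 R2 (relabel flip (Delta (C := T) w))) = lext F w.
Proof.
rewrite lext_tensmap lext_relabel lext_DeltaT; apply: eq_lext => s /=.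
under eq_lext => r1 do under eq_lext => r2 do rewrite /flip /R1 /R2 /= !lext_bas !lext_Zbas /=.
under eq_lext => r1 do rewrite (counitR_bas HD2 (fun b => ceps_b r1.1 *: F (r1.2, b)) s.2).
rewrite (counitL_bas HD1 (fun a => F (a, s.2)) s.1).
by case: s.
Qed.

Lemma surj (C : coalg K) (HC : is_coalgebra C) (z : cvec C -> cvec T) :
  coalg_map z -> exists (x1 : cvec C -> cvec D1) (x2 : cvec C -> cvec D2),
    in_fprod x1 x2 /\ pairing x1 x2 = z.
Proof.
move=> Hz; exists (R1 \o z), (R2 \o z).
have Lz := cm_lin Hz.
have key : forall c, tensmap (R1 \o z) (R2 \o z) (Delta c) = z c.
  move=> c; rewrite -(tensmap_comp z z (Delta c) (cm_lin R1_coalg) (cm_lin R2_coalg)).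
  by rewrite -(cm_Delta Hz); apply: vec_ext => F; apply: R12_idW.
have keyf : forall c, tensmap (R1 \o z) (R2 \o z) (relabel flip (Delta c)) = z c.
  move=> c; rewrite -(tensmap_comp z z _ (cm_lin R1_coalg) (cm_lin R2_coalg)).
  rewrite (tensmap_flip z z) -(cm_Delta Hz).
  by apply: vec_ext => F; apply: R12_flipW.
split.
  split; [exact: coalg_map_comp R1_coalg Hz | exact: coalg_map_comp R2_coalg Hz |].
  by move=> c; rewrite key keyf.
by apply: functional_extensionality => c; apply: key.
Qed.

End Surj.

Section Assoc.
Variable K : fieldType.
Local Notation V B := {malg K[B]}.
Variables (C D1 D2 D3 : coalg K) (HC : is_coalgebra C).
Variables (x1 : cvec C -> cvec D1) (x2 : cvec C -> cvec D2) (x3 : cvec C -> cvec D3).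
Hypotheses (H1 : coalg_map x1) (H2 : coalg_map x2) (H3 : coalg_map x3).
Local Notation cb := (cbasis C).

Definition T3 (W : lmodType K) (l1 l2 l3 : cb -> cb -> cb -> cb)
  (G : cbasis D1 -> cbasis D2 -> cbasis D3 -> W) (c : cvec C) : W :=
  lext (fun p => lext (fun q =>
    lext (fun s1 => lext (fun s2 => lext (fun s3 => G s1 s2 s3)
      (x3 (bas K (l3 p.1 q.1 q.2)))) (x2 (bas K (l2 p.1 q.1 q.2))))
      (x1 (bas K (l1 p.1 q.1 q.2)))) (cdelta_b p.2)) (Delta c).

Definition pi1 (a b d : cb) := a.
Definition pi2 (a b d : cb) := b.
Definition pi3 (a b d : cb) := d.

Lemma T3_alt (W : lmodType K) l1 l2 l3 (G : _ -> _ -> _ -> W) c :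
  T3 l1 l2 l3 G c =
  lext (fun p => lext (fun q =>
    lext (fun s1 => lext (fun s2 => lext (fun s3 => G s1 s2 s3)
      (x3 (bas K (l3 q.1 q.2 p.2)))) (x2 (bas K (l2 q.1 q.2 p.2))))
      (x1 (bas K (l1 q.1 q.2 p.2)))) (cdelta_b p.1)) (Delta c).
Proof.
rewrite /T3 (coassoc HC (fun a b d => lext (fun s1 => lext (fun s2 => lext (fun s3 => G s1 s2 s3)
      (x3 (bas K (l3 a b d)))) (x2 (bas K (l2 a b d)))) (x1 (bas K (l1 a b d))))).
by [].
Qed.

Lemma E1 (W : lmodType K) (F : cbasis (tensor_coalg D1 D2) * cbasis D3 -> W) c :
  lext (fun p => lext (fun a => lext (fun b => F (a, b)) (x3 (bas K p.2)))
                      (pairing x1 x2 (bas K p.1))) (Delta c) =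
  T3 pi1 pi2 pi3 (fun s1 s2 s3 => F ((s1, s2), s3)) c.
Proof.
rewrite T3_alt /pairing; apply: eq_lext => p.
by rewrite lext_tensmap Delta_bas.
Qed.

Lemma E1f (W : lmodType K) (F : cbasis (tensor_coalg D1 D2) * cbasis D3 -> W) c :
  lext (fun p => lext (fun a => lext (fun b => F (a, b)) (x3 (bas K p.1)))
                      (pairing x1 x2 (bas K p.2))) (Delta c) =
  T3 pi2 pi3 pi1 (fun s1 s2 s3 => F ((s1, s2), s3)) c.
Proof.
rewrite /T3 /pairing; apply: eq_lext => p.
by rewrite lext_tensmap Delta_bas.
Qed.

Lemma E2 (W : lmodType K) (F : cbasis D1 * cbasis (tensor_coalg D2 D3) -> W) c :
  lext (fun p => lext (fun a => lext (fun b => F (a, b)) (pairing x2 x3 (bas K p.2)))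
                      (x1 (bas K p.1))) (Delta c) =
  T3 pi1 pi2 pi3 (fun s1 s2 s3 => F (s1, (s2, s3))) c.
Proof.
rewrite /T3 /pairing; apply: eq_lext => p.
under eq_lext => a do rewrite lext_tensmap Delta_bas.
by rewrite lext_swap.
Qed.

Lemma E2f (W : lmodType K) (F : cbasis D1 * cbasis (tensor_coalg D2 D3) -> W) c :
  lext (fun p => lext (fun a => lext (fun b => F (a, b)) (pairing x2 x3 (bas K p.1)))
                      (x1 (bas K p.2))) (Delta c) =
  T3 pi3 pi1 pi2 (fun s1 s2 s3 => F (s1, (s2, s3))) c.
Proof.
rewrite T3_alt /pairing; apply: eq_lext => p.
under eq_lext => a do rewrite lext_tensmap Delta_bas.
by rewrite lext_swap.
Qed.


Lemma condA23 (W : lmodType K) (G : _ -> _ -> _ -> W) c :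
  fprod_cond x2 x3 -> T3 pi3 pi1 pi2 G c = T3 pi3 pi2 pi1 G c.
Proof.
move=> H23; rewrite !T3_alt; apply: eq_lext => p; rewrite /pi1 /pi2 /pi3 /=.
rewrite [LHS]lext_swap [RHS]lext_swap; apply: eq_lext => s1.
by rewrite (cond_bas H23 (fun t => G s1 t.1 t.2) p.1).
Qed.

Lemma condB12 (W : lmodType K) (G : _ -> _ -> _ -> W) c :
  fprod_cond x1 x2 -> T3 pi3 pi2 pi1 G c = T3 pi2 pi3 pi1 G c.
Proof.
move=> H12; rewrite /T3; apply: eq_lext => p; rewrite /pi1 /pi2 /pi3 /=.
by rewrite (cond_bas H12 (fun t => lext (fun s3 => G t.1 t.2 s3) (x3 (bas K p.1))) p.2).
Qed.

Lemma red23a (W : lmodType K) (H : cbasis D2 * cbasis D3 -> W) c :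
  T3 pi1 pi2 pi3 (fun s1 s2 s3 => ceps_b s1 *: H (s2, s3)) c =
  lext (fun p => lext (fun a => lext (fun b => H (a, b)) (x3 (bas K p.2)))
                      (x2 (bas K p.1))) (Delta c).
Proof.
rewrite /T3 /pi1 /pi2 /pi3 /=.
setoid_rewrite lextFZ'.
setoid_rewrite lextFZ'.
setoid_rewrite (cm_epsZ H1).
setoid_rewrite eps_bas.
setoid_rewrite lextFZ'.
rewrite (counitL HC (fun d => lext (fun q => lext (fun a => lext (fun b => H (a, b))
   (x3 (bas K q.2))) (x2 (bas K q.1))) (cdelta_b d))).
by rewrite -lext_Delta.
Qed.


Lemma red23b (W : lmodType K) (H : cbasis D2 * cbasis D3 -> W) c :
  T3 pi2 pi3 pi1 (fun s1 s2 s3 => ceps_b s1 *: H (s2, s3)) c =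
  lext (fun p => lext (fun a => lext (fun b => H (a, b)) (x3 (bas K p.1)))
                      (x2 (bas K p.2))) (Delta c).
Proof.
rewrite /T3 /pi1 /pi2 /pi3 /=.
setoid_rewrite lextFZ'.
setoid_rewrite lextFZ'.
setoid_rewrite (cm_epsZ H1).
setoid_rewrite eps_bas.
apply: eq_lext => p.
exact: (counitL_bas HC (fun b => lext (fun a => lext (fun b0 => H (a, b0))
   (x3 (bas K p.1))) (x2 (bas K b))) p.2).
Qed.

Lemma red12a (W : lmodType K) (H : cbasis D1 * cbasis D2 -> W) c :
  T3 pi1 pi2 pi3 (fun s1 s2 s3 => ceps_b s3 *: H (s1, s2)) c =
  lext (fun p => lext (fun a => lext (fun b => H (a, b)) (x2 (bas K p.2)))
                      (x1 (bas K p.1))) (Delta c).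
Proof.
rewrite /T3 /pi1 /pi2 /pi3 /=.
setoid_rewrite (cm_epsZ H3).
setoid_rewrite eps_bas.
setoid_rewrite lextFZ'.
setoid_rewrite lextFZ'.
apply: eq_lext => p.
exact: (counitR_bas HC (fun b => lext (fun a => lext (fun b0 => H (a, b0))
   (x2 (bas K b))) (x1 (bas K p.1))) p.2).
Qed.

Lemma red12b (W : lmodType K) (H : cbasis D1 * cbasis D2 -> W) c :
  T3 pi3 pi1 pi2 (fun s1 s2 s3 => ceps_b s3 *: H (s1, s2)) c =
  lext (fun p => lext (fun a => lext (fun b => H (a, b)) (x2 (bas K p.1)))
                      (x1 (bas K p.2))) (Delta c).
Proof.
rewrite /T3 /pi1 /pi2 /pi3 /=.
setoid_rewrite (cm_epsZ H3).
setoid_rewrite eps_bas.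
setoid_rewrite lextFZ'.
setoid_rewrite lextFZ'.
apply: eq_lext => p.
exact: (counitL_bas HC (fun b => lext (fun a => lext (fun b0 => H (a, b0))
   (x2 (bas K p.1))) (x1 (bas K b))) p.2).
Qed.

End Assoc.

Section Assoc2.
Variable K : fieldType.
Variables (C D1 D2 D3 : coalg K) (HC : is_coalgebra C).
Variables (x1 : cvec C -> cvec D1) (x2 : cvec C -> cvec D2) (x3 : cvec C -> cvec D3).
Hypotheses (H1 : coalg_map x1) (H2 : coalg_map x2) (H3 : coalg_map x3).

Lemma assoc_fwd : in_fprod x1 x2 -> in_fprod (pairing x1 x2) x3 ->
  in_fprod x2 x3 /\ in_fprod x1 (pairing x2 x3).
Proof.
case=> _ _ c12 [_ _ cB].
have TB : forall (W : lmodType K) G c, T3 x1 x2 x3 (@pi1 K C) (@pi2 K C) (@pi3 K C) G c = T3 x1 x2 x3 (@pi2 K C) (@pi3 K C) (@pi1 K C) G c :> W.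
  move=> W G c.
  have A := cond_lext cB (fun t => G t.1.1 t.1.2 t.2) c.
  have B1 := E1 HC x1 x2 x3 (fun t => G t.1.1 t.1.2 t.2) c.
  have B2 := E1f x1 x2 x3 (fun t => G t.1.1 t.1.2 t.2) c.
  by rewrite -B1 -B2; exact: A.
have c23 : fprod_cond x2 x3.
  apply: lext_cond => W H c.
  by rewrite -(red23a HC x2 x3 H1) -(red23b HC x2 x3 H1) TB.
have f23 : in_fprod x2 x3 by split.
split; first exact: f23.
split; [exact: H1 | exact: (pairing_coalg HC H2 H3 c23) |].
apply: lext_cond => W F c.
apply: (etrans (E2 x1 x2 x3 F c)); apply: (etrans _ (esym (E2f HC x1 x2 x3 F c))).
by rewrite (condA23 HC x1) // (condB12 x3) // TB.
Qed.


Lemma assoc_bwd : in_fprod x2 x3 -> in_fprod x1 (pairing x2 x3) ->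
  in_fprod x1 x2 /\ in_fprod (pairing x1 x2) x3.
Proof.
case=> _ _ c23 [_ _ cC].
have TC : forall (W : lmodType K) G c, T3 x1 x2 x3 (@pi1 K C) (@pi2 K C) (@pi3 K C) G c = T3 x1 x2 x3 (@pi3 K C) (@pi1 K C) (@pi2 K C) G c :> W.
  move=> W G c.
  have A := cond_lext cC (fun t => G t.1 t.2.1 t.2.2) c.
  have B1 := E2 x1 x2 x3 (fun t => G t.1 t.2.1 t.2.2) c.
  have B2 := E2f HC x1 x2 x3 (fun t => G t.1 t.2.1 t.2.2) c.
  by rewrite -B1 -B2; exact: A.
have c12 : fprod_cond x1 x2.
  apply: lext_cond => W H c.
  by rewrite -(red12a HC x1 x2 H3) -(red12b HC x1 x2 H3) TC.
have f12 : in_fprod x1 x2 by split.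
split; first exact: f12.
split; [exact: (pairing_coalg HC H1 H2 c12) | exact: H3 |].
apply: lext_cond => W F c.
apply: (etrans (E1 HC x1 x2 x3 F c)); apply: (etrans _ (esym (E1f x1 x2 x3 F c))).
by rewrite -(condB12 x3) // -(condA23 HC x1) // TC.
Qed.

Lemma lext_pairing (D1' D2' : coalg K) (y1 : cvec C -> cvec D1') (y2 : cvec C -> cvec D2')
  (W : lmodType K) (F : cbasis D1' * cbasis D2' -> W) c :
  lext F (pairing y1 y2 c) =
  lext (fun p => lext (fun a => lext (fun b => F (a, b)) (y2 (bas K p.2))) (y1 (bas K p.1)))
       (Delta c).
Proof. exact: lext_tensmap. Qed.

Lemma assoc_eq :
  @relabel K _ _ assocr \o pairing (pairing x1 x2) x3 = pairing x1 (pairing x2 x3).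
Proof.
have E : forall (W : lmodType K) (F : cbasis D1 * cbasis (tensor_coalg D2 D3) -> W) c,
    lext F (relabel assocr (pairing (pairing x1 x2) x3 c)) =
    lext F (pairing x1 (pairing x2 x3) c).
  move=> W F c.
  have L1 : lext F (relabel assocr (pairing (pairing x1 x2) x3 c)) =
    lext (fun p => lext (fun a => lext (fun b => F (assocr (a, b))) (x3 (bas K p.2)))
      (pairing x1 x2 (bas K p.1))) (Delta c).
    by rewrite lext_relabel; apply: lext_tensmap.
  have L2 : lext F (pairing x1 (pairing x2 x3) c) =
    lext (fun p => lext (fun a => lext (fun b => F (a, b)) (pairing x2 x3 (bas K p.2)))
      (x1 (bas K p.1))) (Delta c) := lext_tensmap _ _ _ _.
  rewrite L1 L2 (E1 HC x1 x2 x3 (fun t => F (assocr t)) c) (E2 x1 x2 x3 F c).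
  by [].
by apply: functional_extensionality => c /=; apply: vec_ext => F; apply: E.
Qed.

End Assoc2.


Unset Implicit Arguments.

Theorem mainTheorem1 (K : fieldType) (charK0 : [pchar K] =i pred0) :
  (* (i) *)
  (forall D1 D2 : coalg K, is_coalgebra D1 -> is_coalgebra D2 ->
     (* sub-presheaf of Y(D1) x Y(D2) *)
     (forall (C C' : coalg K), is_coalgebra C -> is_coalgebra C' ->
        forall g : cvec C' -> cvec C, coalg_map g ->
        forall (x1 : cvec C -> cvec D1) (x2 : cvec C -> cvec D2),
          in_fprod x1 x2 -> in_fprod (x1 \o g) (x2 \o g)) /\
     (* (x1,x2) is a coalgebra map C -> D1 (x) D2 *)
     (forall C : coalg K, is_coalgebra C ->
        forall (x1 : cvec C -> cvec D1) (x2 : cvec C -> cvec D2),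
          in_fprod x1 x2 -> coalg_map (pairing x1 x2)) /\
     (* naturality of (x1,x2) |-> (x1,x2) *)
     (forall (C C' : coalg K), is_coalgebra C -> is_coalgebra C' ->
        forall g : cvec C' -> cvec C, coalg_map g ->
        forall (x1 : cvec C -> cvec D1) (x2 : cvec C -> cvec D2),
          in_fprod x1 x2 -> pairing (x1 \o g) (x2 \o g) = pairing x1 x2 \o g) /\
     (* componentwise injectivity *)
     (forall C : coalg K, is_coalgebra C ->
        forall (x1 y1 : cvec C -> cvec D1) (x2 y2 : cvec C -> cvec D2),
          in_fprod x1 x2 -> in_fprod y1 y2 ->
          pairing x1 x2 = pairing y1 y2 -> x1 = y1 /\ x2 = y2) /\
     (* componentwise surjectivity onto Y(D1 (x) D2)(C) *)
     (forall C : coalg K, is_coalgebra C ->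
        forall z : cvec C -> cvec (tensor_coalg D1 D2), coalg_map z ->
        exists (x1 : cvec C -> cvec D1) (x2 : cvec C -> cvec D2),
          in_fprod x1 x2 /\ pairing x1 x2 = z)) /\
  (* (ii) partial associativity *)
  (forall D1 D2 D3 C : coalg K, is_coalgebra D1 -> is_coalgebra D2 ->
     is_coalgebra D3 -> is_coalgebra C ->
     forall (x1 : cvec C -> cvec D1) (x2 : cvec C -> cvec D2)
            (x3 : cvec C -> cvec D3),
       coalg_map x1 -> coalg_map x2 -> coalg_map x3 ->
       ((in_fprod x1 x2 /\ in_fprod (pairing x1 x2) x3) <->
        (in_fprod x2 x3 /\ in_fprod x1 (pairing x2 x3))) /\
       ((in_fprod x1 x2 /\ in_fprod (pairing x1 x2) x3) ->
        relabel assocr \o pairing (pairing x1 x2) x3 = pairing x1 (pairing x2 x3))) /\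
  (* (iii) unit *)
  (forall D C : coalg K, is_coalgebra D -> is_coalgebra C ->
     forall (e : cvec C -> cvec (unit_coalg K)) (x : cvec C -> cvec D),
       (in_fprod e x <-> coalg_map e /\ coalg_map x) /\
       (in_fprod x e <-> coalg_map x /\ coalg_map e)) /\
  (* (iv) symmetry *)
  (forall D1 D2 C : coalg K, is_coalgebra D1 -> is_coalgebra D2 ->
     is_coalgebra C ->
     forall (x1 : cvec C -> cvec D1) (x2 : cvec C -> cvec D2),
       (in_fprod x1 x2 <-> in_fprod x2 x1) /\
       (in_fprod x1 x2 -> relabel flip \o pairing x1 x2 = pairing x2 x1)).
Proof.
split.
  move=> D1 D2 HD1 HD2; split.
    move=> C C' HC HC' g Hg x1 x2 Hx; exact (fprod_comp Hg Hx).
  split.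
    move=> C HC x1 x2 [H1 H2 Hc]; exact (pairing_coalg HC H1 H2 Hc).
  split.
    move=> C C' HC HC' g Hg x1 x2 Hx; exact (pairing_nat Hg Hx).
  split.
    move=> C HC x1 y1 x2 y2; exact (@pair_inj K C D1 D2 HC x1 y1 x2 y2).
  move=> C HC z Hz; exact (surj HD1 HD2 HC Hz).
split.
  move=> D1 D2 D3 C _ _ _ HC x1 x2 x3 H1 H2 H3; split.
    split; case=> A B.
      exact (assoc_fwd HC H1 H2 H3 A B).
    exact (assoc_bwd HC H1 H2 H3 A B).
  move=> _; exact (assoc_eq HC x1 x2 x3).
split.
  move=> D C HD HC e x; split; split.
  - by case.
  - case=> He Hx; split => //; exact (cond_unit_l HC x He).
  - by case.
  - case=> Hx He; split => //; exact (cond_unit_r HC x He).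
move=> D1 D2 C _ _ HC x1 x2; split.
  split; case=> A B Hc; split => //; exact (cond_sym Hc).
case=> _ _ Hc; exact (pair_flip Hc).
Qed.
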